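(* For every $n\ge1$, the number of non-squashing stacks whose largest box has label exactly $n$ equals $b(2n)$; that is, $f(n)-f(n-1)=b(2n)$. Equivalently, there is a bijection between sets $\{p_1<\cdots<p_k=n\}$ of positive integers with $p_1+\cdots+p_j\le p_{j+1}$ for $1\le j\le k-1$ and non-squashing partitions of $2n$ into distinct parts.
   Context: A partition $n=p_1+\cdots+p_k$ with $1\le p_1\le\cdots\le p_k$ is non-squashing if $p_1+\cdots+p_j\le p_{j+1}$ for all $1\le j\le k-1$; $b(n)$ is the number of non-squashing partitions of $n$ into distinct parts ($b(0)=1$). A non-squashing stack with labels at most $n$ is a (possibly empty) set of distinct integers $1\le p_1<p_2<\cdots<p_k\le n$ satisfying $p_1+\cdots+p_j\le p_{j+1}$ for $1\le j\le k-1$. $f(n)$ denotes the number of such stacks (so $f(0)=1$, counting the empty stack). *)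

(* Defs.v *)
From mathcomp Require Import all_boot.
Set Implicit Arguments. Unset Strict Implicit. Unset Printing Implicit Defensive.

(* A list s = [:: p_1; ...; p_k] (0-indexed here) is non-squashing when
   p_1 + ... + p_j <= p_{j+1} for all 1 <= j <= k-1, i.e. for every
   0-indexed position j with 1 <= j < size s, the sum of the first j
   entries is at most the entry at position j. *)
Definition nonsquashing (s : seq nat) : bool :=
  all (fun j => \sum_(0 <= i < j) nth 0 s i <= nth 0 s j) (iota 1 (size s).-1).

Definition set_seq (m : nat) (A : {set 'I_m}) : seq nat :=
  sort leq [seq val i | i <- enum A].

(* Sets are represented as subsets of 'I_(n.+1)
   not containing 0. *)
Definition f (n : nat) : nat :=
  #|[set A : {set 'I_n.+1} | (ord0 \notin A) && nonsquashing (set_seq A)]|.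

(* b n : number of non-squashing partitions of n into distinct parts, i.e.
   sets of distinct positive integers (all necessarily <= n) with sum n
   that are non-squashing when listed increasingly. b 0 = 1 (empty set). *)
Definition b (n : nat) : nat :=
  #|[set A : {set 'I_n.+1} |
      [&& ord0 \notin A, \sum_(i in A) (val i) == n & nonsquashing (set_seq A)]]|.

(* Main.v *)
Require Import Defs.
From mathcomp Require Import all_boot zify.
Set Implicit Arguments. Unset Strict Implicit.

Lemma set_seq_mem m (A : {set 'I_m}) x :
  (x \in set_seq A) = [exists i in A, val i == x].
Proof.
rewrite /set_seq mem_sort; apply/mapP/existsP => [[i]|[i /andP[iA /eqP <-]]].
  by rewrite mem_enum => iA ->; exists i; rewrite iA eqxx.
by exists i; rewrite ?mem_enum.
Qed.

Lemma set_seq_memi m (A : {set 'I_m}) (i : 'I_m) : (val i \in set_seq A) = (i \in A).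
Proof.
rewrite set_seq_mem; apply/existsP/idP => [[j /andP[jA /eqP/val_inj <-]]|iA] //.
by exists i; rewrite iA eqxx.
Qed.

Lemma set_seq_sorted m (A : {set 'I_m}) : sorted ltn (set_seq A).
Proof.
rewrite ltn_sorted_uniq_leq /set_seq sort_uniq map_inj_uniq ?enum_uniq //=.
  exact: (sort_sorted leq_total).
exact: val_inj.
Qed.

Lemma set_seq_all m (A : {set 'I_m}) : all (fun x => x < m) (set_seq A).
Proof.
apply/allP => x; rewrite set_seq_mem => /existsP[i /andP[_ /eqP <-]]; exact: ltn_ord.
Qed.

Lemma set_seq_inj m : injective (@set_seq m).
Proof.
move=> A B e; apply/setP => i; by rewrite -!set_seq_memi e.
Qed.

Lemma set_seq_sum m (A : {set 'I_m}) : \sum_(i in A) val i = sumn (set_seq A).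
Proof.
rewrite sumnE /set_seq (perm_big _ (introT permPl (perm_sort leq _))) big_map big_enum //.
Qed.

Definition I m (P : pred (seq nat)) (s : seq nat) :=
  [&& sorted ltn s, all (fun x => x < m) s & P s].

Lemma set_seq_surj m s : sorted ltn s -> all (fun x => x < m) s ->
  set_seq [set i : 'I_m | val i \in s] = s.
Proof.
move=> ss sa; apply: (irr_sorted_eq ltn_trans ltnn) => //; first exact: set_seq_sorted.
move=> x; rewrite set_seq_mem; apply/existsP/idP => [[i]|xs].
  by rewrite inE => /andP[H /eqP <-].
have xm : x < m by move/allP: sa; apply.
by exists (Ordinal xm); rewrite inE /= xs eqxx.
Qed.

Lemma card_leqI m k (P Q : pred (seq nat)) (g h : seq nat -> seq nat) :
  (forall s, I m P s -> I k Q (g s)) -> (forall s, I m P s -> h (g s) = s) ->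
  #|[set A : {set 'I_m} | P (set_seq A)]| <= #|[set B : {set 'I_k} | Q (set_seq B)]|.
Proof.
move=> gI hg.
set L1 := map (@set_seq m) (enum [set A : {set 'I_m} | P (set_seq A)]).
set L2 := map (@set_seq k) (enum [set B : {set 'I_k} | Q (set_seq B)]).
have mL1 s : s \in L1 -> I m P s.
  by case/mapP => A; rewrite mem_enum inE => PA ->; rewrite /I PA set_seq_sorted set_seq_all.
have mL2 s : I k Q s -> s \in L2.
  case/and3P => ss sa Qs; apply/mapP; exists [set i : 'I_k | val i \in s].
    by rewrite mem_enum inE set_seq_surj.
  by rewrite set_seq_surj.
rewrite !cardE -(size_map (@set_seq m)) -(size_map (@set_seq k)) -/L1 -/L2.
rewrite -(size_map g); apply: uniq_leq_size.
  rewrite map_inj_in_uniq ?map_inj_uniq ?enum_uniq //; first exact: set_seq_inj.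
  by move=> s t /mL1 Hs /mL1 Ht e; rewrite -(hg _ Hs) -(hg _ Ht) e.
by move=> s /mapP[t /mL1 Ht ->]; apply: mL2; apply: gI.
Qed.

Lemma nsE s : nonsquashing s =
  all (fun j => \sum_(0 <= i < j) nth 0 s i <= nth 0 s j) (iota 0 (size s)).
Proof.
rewrite /nonsquashing; case: (size s) => [|k] //=.
by rewrite big_geq.
Qed.

Lemma ns_rcons t x : nonsquashing (rcons t x) = nonsquashing t && (sumn t <= x).
Proof.
rewrite !nsE size_rcons -addn1 iotaD all_cat /= andbT add0n.
congr (_ && _).
  apply: eq_in_all => j; rewrite mem_iota add0n => /andP[_ jt].
  rewrite nth_rcons jt; congr (_ <= _); apply: eq_big_nat => i /andP[_ ij].
  by rewrite nth_rcons (ltn_trans ij jt).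
rewrite nth_rcons ltnn eqxx; congr (_ <= _).
rewrite sumnE [RHS](big_nth 0); apply: eq_big_nat => i /andP[_ it].
by rewrite nth_rcons it.
Qed.

Lemma sorted_rcons t x : sorted ltn (rcons t x) = sorted ltn t && all (fun y => y < x) t.
Proof.
by rewrite !(sorted_pairwise ltn_trans) pairwise_rcons andbC.
Qed.

Lemma le_sumn t e : e \in t -> e <= sumn t.
Proof.
elim: t => //= a t IH; rewrite inE => /orP[/eqP ->|/IH]; first exact: leq_addr.
move=> H; exact: (leq_trans H (leq_addl _ _)).
Qed.

Definition Pf (s : seq nat) := (0 \notin s) && nonsquashing s.
Definition Pb N (s : seq nat) := [&& 0 \notin s, sumn s == N & nonsquashing s].

Lemma fE m : f m = #|[set A : {set 'I_m.+1} | Pf (set_seq A)]|.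
Proof.
rewrite /f; apply: eq_card => A; rewrite !inE /Pf.
by rewrite -(set_seq_memi A ord0).
Qed.

Lemma bE m : b m = #|[set A : {set 'I_m.+1} | Pb m (set_seq A)]|.
Proof.
rewrite /b; apply: eq_card => A; rewrite !inE /Pb.
by rewrite -(set_seq_memi A ord0) set_seq_sum.
Qed.

Lemma card_split m (P Q : pred (seq nat)) :
  #|[set A : {set 'I_m} | P (set_seq A)]| =
  #|[set A : {set 'I_m} | P (set_seq A) && ~~ Q (set_seq A)]| +
  #|[set A : {set 'I_m} | P (set_seq A) && Q (set_seq A)]|.
Proof.
rewrite -(cardID [set A : {set 'I_m} | Q (set_seq A)] [set A : {set 'I_m} | P (set_seq A)]) addnC.
congr (_ + _); apply: eq_card => A; by rewrite !inE // andbC.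
Qed.

Lemma take_rcons' (t : seq nat) x : take (size (rcons t x)).-1 (rcons t x) = t.
Proof. by rewrite size_rcons /= -cats1 take_size_cat. Qed.

Lemma all_lt_mono (t : seq nat) a c : a <= c -> all (fun y => y < a) t -> all (fun y => y < c) t.
Proof. move=> ac /allP H; apply/allP => y /H; lia. Qed.

Theorem mainTheorem9 (n : nat) : 1 <= n -> f n = f n.-1 + b (2 * n).
Proof.
case: n => [//|n] _ /=; set N := n.+1.
rewrite !fE bE (card_split _ _ (fun s => N \in s)); congr (_ + _).
  apply/eqP; rewrite eqn_leq; apply/andP; split.
    apply: (@card_leqI _ _ (fun s => Pf s && ~~ (N \in s)) Pf id id) => // s /and3P[ss sa /andP[Ps Ns]].
    rewrite /I ss Ps andbT /=; apply/allP => y ys.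
    move/allP: sa => /(_ y ys); rewrite ltnS leq_eqVlt => /orP[/eqP e|//].
    by move: Ns; rewrite -e ys.
  apply: (@card_leqI _ _ Pf (fun s => Pf s && ~~ (N \in s)) id id) => // s /and3P[ss sa Ps].
  rewrite /I ss Ps /= (all_lt_mono (leqnSn _) sa) /=.
  by apply/negP => /(allP sa); rewrite ltnn.
set g := fun s : seq nat => rcons (take (size s).-1 s) (2 * N - sumn (take (size s).-1 s)).
set h := fun s : seq nat => rcons (take (size s).-1 s) N.
set C := fun t : seq nat => [&& sorted ltn t, all (fun y => y < N) t, 0 \notin t, nonsquashing t & sumn t <= N].
have k1 t x : I N.+1 (fun s => Pf s && (N \in s)) (rcons t x) -> x = N /\ C t.
  rewrite /I /Pf !sorted_rcons !all_rcons !ns_rcons !mem_rcons !inE.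
  case/and4P=> /andP[st ax] /andP[xN at'] /andP[/norP[x0 t0] /andP[nst sx]] Nin.
  have xe : x = N.
    case/orP: Nin => [/eqP //|Nt]; move/allP: ax => /(_ _ Nt); lia.
  subst x; split => //; by rewrite /C st ax t0 nst sx.
have k2 t x : I (2 * N).+1 (Pb (2 * N)) (rcons t x) -> x = 2 * N - sumn t /\ C t.
  rewrite /I /Pb !sorted_rcons !all_rcons !ns_rcons !mem_rcons !inE !sumn_rcons.
  case/and3P=> /andP[st ax] /andP[x2N at'] /and3P[/norP[x0 t0] /eqP sum /andP[nst sx]].
  have tN : all (fun y => y < N) t.
    apply/allP => y yt; have := le_sumn yt; move/allP: ax => /(_ _ yt); lia.
  split; first lia.
  by rewrite /C st tN t0 nst /=; lia.
have c1 t : C t -> I N.+1 (fun s => Pf s && (N \in s)) (rcons t N).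
  case/and5P => st tN t0 nst sN.
  rewrite /I /Pf !sorted_rcons !all_rcons !ns_rcons !mem_rcons !inE.
  by rewrite st tN t0 nst sN eqxx (all_lt_mono (leqnSn _) tN) /=; lia.
have c2 t : C t -> I (2 * N).+1 (Pb (2 * N)) (rcons t (2 * N - sumn t)).
  case/and5P => st tN t0 nst sN.
  rewrite /I /Pb !sorted_rcons !all_rcons !ns_rcons !mem_rcons !inE !sumn_rcons.
  rewrite st nst (negbTE t0) (all_lt_mono _ tN) ?(all_lt_mono _ tN) /= ?orbF; lia.
have nil1 : ~~ I N.+1 (fun s => Pf s && (N \in s)) [::] by rewrite /I /Pf /= ?andbF.
have nil2 : ~~ I (2 * N).+1 (Pb (2 * N)) [::].
  by apply/negP; rewrite /I /Pb /=.
apply/eqP; rewrite eqn_leq; apply/andP; split.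
  apply: (@card_leqI _ _ (fun s => Pf s && (N \in s)) (Pb (2 * N)) g h);
    case/lastP => [|t x]; rewrite ?(negbTE nil1) // /g /h take_rcons';
    by move/k1 => [e Ct]; subst x; rewrite ?take_rcons' ?c2.
apply: (@card_leqI _ _ (Pb (2 * N)) (fun s => Pf s && (N \in s)) h g);
  case/lastP => [|t x]; rewrite ?(negbTE nil2) // /g /h take_rcons';
  by move/k2 => [e Ct]; subst x; rewrite ?take_rcons' ?c1.
Qed.
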